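(* Let $Z$ be a critical Galton–Watson process with $Z_0=1$ and non-degenerate offspring variable $\xi$ (i.e. $\mathbf{E}\xi=1$ and $\mathbf{P}(\xi=1)<1$). There exist finite constants $c_1,c_2$ such that $$\mathbf{P}(M_{m+1}\geq k)\leq c_1\frac{mB_k}{k^2}+m\,\mathbf{P}(\xi>k/2)$$ for all integers $k,m\geq1$ satisfying $k/(mB_k)>c_2$.
   Context: $M_m:=\max_{0\leq l\leq m-1}Z_l$. For $R\geq2$, $B_R:=\mathbf{E}\{\xi(\xi-1);\,\xi\leq R\}$. No index-$(1+\alpha)$ assumption is made here. *)

(* Defs.v *)
From Stdlib Require Import Reals Lra Lia.
From Coquelicot Require Import Coquelicot.
Open Scope R_scope.

Definition offspring_law (p : nat -> R) : Prop :=
  (forall j, 0 <= p j) /\ is_series p 1.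

Definition critical_nondeg (p : nat -> R) : Prop :=
  is_series (fun j => INR j * p j) 1 /\ p 1%nat < 1.

(* i-fold convolution power of p: the law of xi_1 + ... + xi_i
   (i iid copies of xi); this is the GW transition P(Z_{l+1}=j | Z_l=i). *)
Fixpoint convpow (p : nat -> R) (i j : nat) : R :=
  match i with
  | O => if Nat.eqb j 0 then 1 else 0
  | S i' => sum_n (fun a => p a * convpow p i' (j - a)) j
  end.

(* below p k l z = P(Z_0 < k, ..., Z_l < k, Z_l = z) for the GW process
   with Z_0 = 1 and offspring law p. *)
Fixpoint below (p : nat -> R) (k l z : nat) : R :=
  match l with
  | O => if (Nat.eqb z 1 && Nat.ltb z k)%bool then 1 else 0
  | S l' =>
      if Nat.ltb z k then
        sum_n (fun y => if Nat.ltb y k then below p k l' y * convpow p y z else 0) k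
      else 0
  end.

(* P(M_{m+1} >= k), where M_{m+1} = max_{0 <= l <= m} Z_l. *)
Definition GW_max_ge (p : nat -> R) (m k : nat) : R :=
  1 - sum_n (fun z => if Nat.ltb z k then below p k m z else 0) k.

Definition B (p : nat -> R) (R0 : nat) : R :=
  sum_n (fun j => INR j * (INR j - 1) * p j) R0.

Definition tail (p : nat -> R) (x : R) : R :=
  Series (fun j => if Rlt_dec x (INR j) then p j else 0).

(* Main.v *)
Require Import Defs.
From Stdlib Require Import Reals Lra Lia Arith Classical.
From Coquelicot Require Import Coquelicot.
Open Scope R_scope.

Lemma snS (f : nat -> R) n : sum_n f (S n) = sum_n f n + f (S n).
Proof. rewrite sum_Sn; reflexivity. Qed.
Lemma sn0 (f : nat -> R) : sum_n f 0 = f 0%nat.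
Proof. apply sum_O. Qed.
Lemma sn_plus (f g : nat -> R) n : sum_n (fun i => f i + g i) n = sum_n f n + sum_n g n.
Proof. apply (sum_n_plus f g n). Qed.
Lemma sn_scal (c : R) (f : nat -> R) n : sum_n (fun i => c * f i) n = c * sum_n f n.
Proof. apply (sum_n_mult_l c f n). Qed.
Lemma sn_ext (f g : nat -> R) n : (forall i, (i <= n)%nat -> @eq R (f i) (g i)) -> @eq R (sum_n f n) (sum_n g n).
Proof. apply sum_n_ext_loc. Qed.
Lemma sn_le (f g : nat -> R) n : (forall i, (i <= n)%nat -> f i <= g i) -> sum_n f n <= sum_n g n.
Proof.
  induction n; intros H. rewrite !sn0; apply H; lia.
  rewrite !snS. apply Rplus_le_compat. apply IHn; intros; apply H; lia. apply H; lia.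
Qed.
Lemma sn_nonneg (f : nat -> R) n : (forall i, (i <= n)%nat -> 0 <= f i) -> 0 <= sum_n f n.
Proof.
  intros H. assert (E: sum_n (fun _ => 0) n = 0) by (rewrite sum_n_const; apply Rmult_0_r).
  rewrite <- E. apply sn_le. exact H.
Qed.
Lemma sn_zero_ext (f : nat -> R) n m : (n <= m)%nat -> (forall i, (n < i)%nat -> f i = 0) ->
  @eq R (sum_n f m) (sum_n f n).
Proof.
  intros Hnm H; induction Hnm. reflexivity.
  rewrite snS, IHHnm, H; [ring|lia].
Qed.
Lemma sn_mono (f : nat -> R) n m : (n <= m)%nat -> (forall i, 0 <= f i) -> sum_n f n <= sum_n f m.
Proof.
  intros Hnm H; induction Hnm. lra.
  rewrite snS. specialize (H (S m)). lra.
Qed.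
Lemma sn_switch (u : nat -> nat -> R) m n :
  sum_n (fun i => sum_n (u i) n) m = sum_n (fun j => sum_n (fun i => u i j) m) n.
Proof. apply sum_n_switch. Qed.

Lemma conv_shift (q c f : nat -> R) N :
  @eq R (sum_n (fun w => sum_n (fun a => q a * c (w - a)%nat) w * f w) N)
  (sum_n (fun a => q a * sum_n (fun b => c b * f (a + b)%nat) (N - a)) N).
Proof.
  induction N.
  - rewrite !sn0. simpl. ring.
  - rewrite (snS (fun w => sum_n (fun a => q a * c (w - a)%nat) w * f w)), IHN.
    rewrite (snS (fun a => q a * sum_n (fun b => c b * f (a + b)%nat) (S N - a))). replace (S N - S N)%nat with 0%nat by lia. rewrite sn0.
    rewrite (sn_ext (fun a => q a * sum_n (fun b => c b * f (a + b)%nat) (S N - a))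
       (fun a => q a * sum_n (fun b => c b * f (a + b)%nat) (N - a) + q a * c (S N - a)%nat * f (S N)) N).
    + rewrite sn_plus, (snS (fun a => q a * c (S N - a)%nat)).
      assert (E: sum_n (fun a => q a * c (S N - a)%nat * f (S N)) N = sum_n (fun a => q a * c (S N - a)%nat) N * f (S N)).
      { exact (sum_n_mult_r (f (S N)) (fun a => q a * c (S N - a)%nat) N). }
      rewrite E.
      replace (S N + 0)%nat with (S N) by lia. 
      replace (S N - S N)%nat with 0%nat by lia. ring.
    + intros i Hi. replace (S N - i)%nat with (S (N - i)) by lia. rewrite snS.
      replace (i + S (N - i))%nat with (S N) by lia. replace (S (N-i)) with (S N - i)%nat by lia. ring.
Qed.
Lemma sn_scalr (c : R) (f : nat -> R) n : @eq R (sum_n (fun i => f i * c) n) (sum_n f n * c).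
Proof. apply (sum_n_mult_r c f n). Qed.
Lemma sn_zero n : @eq R (sum_n (fun _ => 0) n) 0.
Proof. rewrite sum_n_const. apply Rmult_0_r. Qed.
Lemma sn_lin (f g : nat -> R) c n : sum_n (fun i => f i + c * g i) n = sum_n f n + c * sum_n g n.
Proof. rewrite sn_plus, sn_scal. reflexivity. Qed.
Lemma sn_tail_le (f : nat -> R) n N : (n <= N)%nat -> (forall i, (n < i)%nat -> f i <= 0) ->
  sum_n f N <= sum_n f n.
Proof.
  intros Hn H; induction Hn. lra.
  rewrite snS. specialize (H (S m)). assert (f (S m) <= 0) by (apply H; lia). lra.
Qed.
Lemma ser_lim (a : nat -> R) l : is_series a l -> is_lim_seq (sum_n a) l.
Proof. intros H. exact H. Qed.
Lemma ser_partial_le (a : nat -> R) l : is_series a l -> (forall n, 0 <= a n) -> forall N, sum_n a N <= l.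
Proof. intros H Ha N. apply (is_lim_seq_incr_compare (sum_n a) l (ser_lim a l H)).
intros n. rewrite sum_Sn. specialize (Ha (S n)). simpl. unfold plus; simpl. lra. Qed.
Lemma sn_comb (f g : nat -> R) c n : @eq R (sum_n (fun i => f i - g i * c) n) (sum_n f n - sum_n g n * c).
Proof. induction n. rewrite !sn0. ring. rewrite !snS, IHn. ring. Qed.

Lemma convS (q : nat -> R) i w : convpow q (S i) w = sum_n (fun a => q a * convpow q i (w - a)%nat) w.
Proof. reflexivity. Qed.

Lemma conv_nonneg q : (forall j, 0 <= q j) -> forall i j, 0 <= convpow q i j.
Proof.
  intros H i; induction i; intros j.
  - simpl. destruct (Nat.eqb j 0); lra.
  - rewrite convS. apply sn_nonneg. intros. apply Rmult_le_pos; auto.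
Qed.

Lemma conv_mono q p : (forall j, 0 <= q j <= p j) -> forall i j, convpow q i j <= convpow p i j.
Proof.
  intros H i; induction i; intros j.
  - simpl. lra.
  - rewrite !convS. apply sn_le. intros a _.
    assert (0 <= convpow q i (j - a)) by (apply conv_nonneg; intros; apply H).
    specialize (H a). specialize (IHi (j-a)%nat).
    apply Rmult_le_compat; lra.
Qed.

Lemma conv0_sum q f N : @eq R (sum_n (fun w => convpow q 0 w * f w) N) (f 0%nat).
Proof.
  rewrite (sn_zero_ext _ 0 N); [|lia|].
  - rewrite sn0. simpl. ring.
  - intros i Hi. simpl. destruct i; [lia|]. simpl. ring.
Qed.

Lemma conv_support q h : (forall j, (h < j)%nat -> q j = 0) ->
  forall i w, (i * h < w)%nat -> convpow q i w = 0.
Proof.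
  intros H i; induction i; intros w Hw.
  - simpl. destruct w; [lia|]. reflexivity.
  - rewrite convS.
    transitivity (sum_n (fun _ : nat => 0) w).
    + apply sn_ext. intros a Ha. destruct (le_lt_dec a h).
      * rewrite IHi; [ring|]. simpl in Hw. lia.
      * rewrite H; [ring|lia].
    + rewrite sum_n_const. ring.
Qed.

Lemma conv_tail q h i f N : (forall j, (h < j)%nat -> q j = 0) -> (i * h <= N)%nat ->
  @eq R (sum_n (fun w => convpow q i w * f w) N) (sum_n (fun w => convpow q i w * f w) (i * h)).
Proof.
  intros H HN. apply sn_zero_ext; auto. intros w Hw. rewrite (conv_support q h H i w Hw). ring.
Qed.

Lemma conv_rec q h i f N : (forall j, (h < j)%nat -> q j = 0) -> (S i * h <= N)%nat ->
  @eq R (sum_n (fun w => convpow q (S i) w * f w) N)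
  (sum_n (fun a => q a * sum_n (fun b => convpow q i b * f (a + b)%nat) (i * h)) h).
Proof.
  intros H HN.
  transitivity (sum_n (fun w => sum_n (fun a => q a * convpow q i (w - a)%nat) w * f w) N).
  { apply sn_ext; intros; reflexivity. }
  rewrite conv_shift.
  rewrite (sn_ext _ (fun a => q a * sum_n (fun b => convpow q i b * f (a + b)%nat) (i * h)) N).
  - apply sn_zero_ext. simpl in HN; lia. intros a Ha. rewrite H; [ring|lia].
  - intros a Ha. destruct (le_lt_dec a h).
    + f_equal. apply (conv_tail q h i (fun b => f (a+b)%nat)); auto. simpl in HN; lia.
    + rewrite H; [ring|lia].
Qed.

Section Full.
Variable p : nat -> R.
Hypothesis p0 : forall j, 0 <= p j.
Hypothesis pm : forall N, sum_n p N <= 1.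
Hypothesis pmean : forall N, sum_n (fun j => INR j * p j) N <= 1.

Lemma full_mass : forall i N, sum_n (convpow p i) N <= 1.
Proof.
  induction i; intros N.
  - assert (E := conv0_sum p (fun _ => 1) N).
    rewrite (sn_ext _ (fun w => convpow p 0 w * 1)); [rewrite E; lra| intros; ring].
  - rewrite (sn_ext _ (fun w => sum_n (fun a => p a * convpow p i (w - a)%nat) w * 1)); [|intros; rewrite convS, Rmult_1_r; reflexivity].
    rewrite conv_shift.
    apply Rle_trans with (sum_n p N); auto.
    apply sn_le; intros a _.
    rewrite <- (Rmult_1_r (p a)) at 2. apply Rmult_le_compat_l; auto.
    rewrite (sn_ext _ (convpow p i)); auto. intros; apply Rmult_1_r.
Qed.

Lemma full_mean : forall i N, sum_n (fun w => convpow p i w * INR w) N <= INR i.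
Proof.
  induction i; intros N.
  - rewrite conv0_sum. simpl. lra.
  - rewrite (sn_ext _ (fun w => sum_n (fun a => p a * convpow p i (w - a)%nat) w * INR w)); [|intros; reflexivity].
    rewrite conv_shift.
    apply Rle_trans with (sum_n (fun a => INR a * p a + INR i * p a) N).
    + apply sn_le; intros a _.
      rewrite (sn_ext _ (fun b => INR a * convpow p i b + convpow p i b * INR b)).
      2:{ intros. rewrite plus_INR; ring. }
      rewrite sn_plus, sn_scal.
      assert (H1 := full_mass i (N - a)). assert (H2 := IHi (N - a)%nat).
      assert (0 <= INR a) by apply pos_INR. specialize (p0 a).
      assert (INR a * sum_n (convpow p i) (N - a) <= INR a) by (apply Rle_trans with (INR a * 1); [apply Rmult_le_compat_l|]; lra).
      nra.
    + rewrite sn_plus, sn_scal. rewrite S_INR. specialize (pmean N). specialize (pm N).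
      assert (0 <= INR i) by apply pos_INR. nra.
Qed.
End Full.

Section Trunc.
Variable q : nat -> R.
Variable h : nat.
Hypothesis q0 : forall j, 0 <= q j.
Hypothesis qs : forall j, (h < j)%nat -> q j = 0.
Let A := sum_n q h.
Let Bm := sum_n (fun a => INR a * q a) h.
Let S2 := sum_n (fun a => INR a * INR a * q a) h.
Hypothesis A1 : A <= 1.
Hypothesis B1 : Bm <= 1.

Definition M0 i : R := sum_n (convpow q i) (i * h).
Definition M1 i : R := sum_n (fun w => convpow q i w * INR w) (i * h).
Definition M2 i : R := sum_n (fun w => convpow q i w * (INR w * INR w)) (i * h).

Lemma M0S i : M0 (S i) = A * M0 i.
Proof.
  unfold M0. 
  transitivity (sum_n (fun w => convpow q (S i) w * 1) (S i * h)).
  { apply sn_ext; intros; ring. }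
  rewrite (conv_rec q h i (fun _ => 1)); auto.
  unfold A. rewrite <- sn_scalr. apply sn_ext. intros a _.
  simpl mult. f_equal. apply sn_ext; intros; ring.
Qed.

Lemma M1S i : M1 (S i) = Bm * M0 i + A * M1 i.
Proof.
  unfold M1. rewrite (conv_rec q h i (fun w => INR w)); auto.
  unfold A, Bm. rewrite <- !sn_scalr. rewrite <- sn_plus.
  apply sn_ext. intros a _.
  rewrite (sn_ext _ (fun b => INR a * convpow q i b + convpow q i b * INR b)).
  2:{ intros. rewrite plus_INR; ring. }
  rewrite sn_plus, sn_scal. unfold M0. ring.
Qed.

Lemma M2S i : M2 (S i) = S2 * M0 i + 2 * Bm * M1 i + A * M2 i.
Proof.
  unfold M2 at 1. rewrite (conv_rec q h i (fun w => INR w * INR w)); auto.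
  transitivity (sum_n (fun a => (INR a*INR a*q a) * M0 i + (2 * ((INR a * q a) * M1 i) + q a * M2 i)) h).
  - apply sn_ext. intros a _.
    rewrite (sn_ext _ (fun b => (INR a * INR a) * convpow q i b + ((2 * INR a) * (convpow q i b * INR b) + convpow q i b * (INR b * INR b)))).
    2:{ intros. rewrite plus_INR; ring. }
    rewrite !sn_plus, !sn_scal. unfold M0, M1, M2. ring.
  - rewrite !sn_plus, sn_scal, !sn_scalr. unfold A, Bm, S2. ring.
Qed.

Lemma A0 : 0 <= A.
Proof. apply sn_nonneg; auto. Qed.
Lemma Bm0 : 0 <= Bm.
Proof. apply sn_nonneg; intros; apply Rmult_le_pos; auto; apply pos_INR. Qed.
Lemma S20 : 0 <= S2.
Proof. apply sn_nonneg; intros; apply Rmult_le_pos; auto; apply Rmult_le_pos; apply pos_INR. Qed.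

Lemma moments i :
  0 <= M0 i <= 1 /\ 1 - INR i * (1 - A) <= M0 i /\
  0 <= M1 i <= INR i /\ 0 <= M2 i <= INR i * S2 + INR i * INR i.
Proof.
  assert (HA := A0). assert (HB := Bm0). assert (HS := S20).
  induction i.
  - unfold M0, M1, M2. simpl (0 * h)%nat. rewrite !sn0. simpl. lra.
  - rewrite M0S, M1S, M2S. rewrite S_INR.
    destruct IHi as [[a1 a2] [a3 [[a4 a5] [a6 a7]]]].
    assert (0 <= INR i) by apply pos_INR.
    split; [split; nra|]. split; [nra|]. split; [split; nra|]. split; nra.
Qed.
End Trunc.

Section Key.
Variable p : nat -> R.
Hypothesis p0 : forall j, 0 <= p j.
Hypothesis pm : forall N, sum_n p N <= 1.
Hypothesis pmean : forall N, sum_n (fun j => INR j * p j) N <= 1.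
Variable k : nat.
Hypothesis hk : (2 <= k)%nat.
Let h := (k / 2)%nat.
Definition qt (j : nat) : R := if (j <=? h)%nat then p j else 0.
Let K := INR k * INR k.
Let A := sum_n qt h.
Let S2 := sum_n (fun a => INR a * INR a * qt a) h.

Lemma qt0 j : 0 <= qt j.
Proof. unfold qt. destruct (j <=? h)%nat; auto; lra. Qed.
Lemma qts j : (h < j)%nat -> qt j = 0.
Proof. intros H. unfold qt. destruct (Nat.leb_spec j h); [lia|auto]. Qed.
Lemma qtp j : 0 <= qt j <= p j.
Proof. unfold qt. destruct (j <=? h)%nat; split; auto; lra. Qed.
Lemma A_eq : A = sum_n p h.
Proof. unfold A. apply sn_ext. intros i Hi. unfold qt. destruct (Nat.leb_spec i h); [auto|lia]. Qed.
Lemma A1 : A <= 1.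
Proof. rewrite A_eq. auto. Qed.
Lemma Bm1 : sum_n (fun a => INR a * qt a) h <= 1.
Proof.
  rewrite (sn_ext _ (fun j => INR j * p j)). auto.
  intros i Hi. unfold qt. destruct (Nat.leb_spec i h); [auto|lia].
Qed.

Lemma Kpos : 0 < K.
Proof. unfold K. assert (0 < INR k) by (apply lt_0_INR; lia). nra. Qed.

Definition Pk y (g : nat -> R) := sum_n (fun w => if (w <? k)%nat then convpow p y w * g w else 0) k.

Lemma key y : Pk y (fun _ => 1) - Pk y (fun w => INR w * INR w) / K >=
   1 - INR y * (1 - A) - (INR y * S2 + INR y * INR y) / K.
Proof.
  assert (HK := Kpos).
  assert (E1 : Pk y (fun _ => 1) - Pk y (fun w => INR w * INR w) / K =
     sum_n (fun w => if (w <? k)%nat then convpow p y w * (1 - INR w * INR w / K) else 0) k).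
  { unfold Pk. unfold Rdiv. rewrite <- sn_comb. apply sn_ext. intros w _.
    destruct (w <? k)%nat; ring. }
  rewrite E1. apply Rle_ge.
  apply Rle_trans with (sum_n (fun w => convpow qt y w * (1 - INR w * INR w / K)) k).
  2:{ apply sn_le. intros w Hw. destruct (Nat.ltb_spec w k).
      - apply Rmult_le_compat_r. 
        + assert (INR w < INR k) by (apply lt_INR; auto). assert (0 <= INR w) by apply pos_INR.
          assert (INR w * INR w <= K) by (unfold K; nra).
          assert (INR w * INR w / K <= 1). { apply (Rmult_le_reg_r K); auto. unfold Rdiv. rewrite Rmult_assoc, Rinv_l; lra. }
          lra.
        + apply conv_mono. apply qtp.
      - replace w with k by lia. fold K. unfold Rdiv. rewrite Rinv_r; lra. }
  apply Rle_trans with (sum_n (fun w => convpow qt y w * (1 - INR w * INR w / K)) (k + y * h)).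
  2:{ apply sn_tail_le. lia. intros w Hw.
      assert (INR k < INR w) by (apply lt_INR; auto). assert (0 <= INR k) by apply pos_INR.
      assert (K < INR w * INR w) by (unfold K; nra).
      assert (1 < INR w * INR w / K). { apply (Rmult_lt_reg_r K); auto. unfold Rdiv. rewrite Rmult_assoc, Rinv_l; lra. }
      assert (0 <= convpow qt y w) by (apply conv_nonneg, qt0). nra. }
  rewrite (conv_tail qt h y (fun w => 1 - INR w * INR w / K) (k + y * h) qts); [|lia].
  assert (E2 : sum_n (fun w => convpow qt y w * (1 - INR w * INR w / K)) (y * h) = M0 qt h y - M2 qt h y / K).
  { unfold M0, M2. unfold Rdiv. rewrite <- sn_comb. apply sn_ext. intros w _. ring. }
  rewrite E2.
  destruct (moments qt h qt0 qts A1 Bm1 y) as [[a1 a2] [a3 [[a4 a5] [a6 a7]]]].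
  fold A in a3. fold S2 in a7.
  assert (M2 qt h y / K <= (INR y * S2 + INR y * INR y) / K).
  { unfold Rdiv. apply Rmult_le_compat_r; auto. left; apply Rinv_0_lt_compat; auto. }
  lra.
Qed.
End Key.

Section Main.
Variable p : nat -> R.
Hypothesis p0 : forall j, 0 <= p j.
Hypothesis pm : forall N, sum_n p N <= 1.
Hypothesis pmean : forall N, sum_n (fun j => INR j * p j) N <= 1.
Variable k : nat.
Hypothesis hk : (2 <= k)%nat.
Let h := (k / 2)%nat.
Let K := INR k * INR k.
Let A := sum_n (qt p k) h.
Let S2 := sum_n (fun a => INR a * INR a * qt p k a) h.

Lemma belowS l z : below p k (S l) z = if (z <? k)%nat then
  sum_n (fun y => if (y <? k)%nat then below p k l y * convpow p y z else 0) k else 0.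
Proof. reflexivity. Qed.

Lemma below_nn l z : 0 <= below p k l z.
Proof.
  revert z; induction l; intros z.
  - simpl. destruct (_ && _)%bool; lra.
  - rewrite belowS. destruct (z <? k)%nat; [|lra]. apply sn_nonneg. intros y _.
    destruct (y <? k)%nat; [|lra]. apply Rmult_le_pos; auto. apply conv_nonneg; auto.
Qed.

Definition F l (g : nat -> R) : R := sum_n (fun z => if (z <? k)%nat then below p k l z * g z else 0) k.

Lemma Fstep l g : F (S l) g = sum_n (fun y => if (y <? k)%nat then below p k l y * Pk p k y g else 0) k.
Proof.
  unfold F.
  transitivity (sum_n (fun w => sum_n (fun y => if (w <? k)%nat then if (y <? k)%nat then below p k l y * convpow p y w * g w else 0 else 0) k) k).
  { apply sn_ext. intros w _. rewrite belowS. destruct (w <? k)%nat.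
    - rewrite <- sn_scalr. apply sn_ext. intros y _. destruct (y <? k)%nat; ring.
    - rewrite sn_zero. reflexivity. }
  rewrite sn_switch. apply sn_ext. intros y _. unfold Pk. destruct (y <? k)%nat.
  - rewrite <- sn_scal. apply sn_ext. intros w _. destruct (w <? k)%nat; ring.
  - transitivity (sum_n (fun _ : nat => 0) k); [|apply sn_zero].
    apply sn_ext. intros w _. destruct (w <? k)%nat; ring.
Qed.

Let c' := (1 - A) + S2 / K.

Lemma F_nn l g : (forall z, 0 <= g z) -> 0 <= F l g.
Proof.
  intros H. unfold F. apply sn_nonneg. intros z _. destruct (z <? k)%nat; [|lra].
  apply Rmult_le_pos; auto. apply below_nn.
Qed.

Lemma mean_step l : F (S l) INR <= F l INR.
Proof.
  rewrite Fstep. unfold F. apply sn_le. intros y _. destruct (y <? k)%nat; [|lra].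
  apply Rmult_le_compat_l. apply below_nn.
  apply Rle_trans with (sum_n (fun w => convpow p y w * INR w) k).
  - unfold Pk. apply sn_le. intros w _. destruct (w <? k)%nat; [lra|].
    apply Rmult_le_pos. apply conv_nonneg; auto. apply pos_INR.
  - apply full_mean; auto.
Qed.

Lemma pot_step l :
  1 - F (S l) (fun _ => 1) + F (S l) (fun w => INR w * INR w) / K <=
  1 - F l (fun _ => 1) + F l (fun w => INR w * INR w) / K + c' * F l INR.
Proof.
  assert (E1 : F (S l) (fun _ => 1) - F (S l) (fun w => INR w * INR w) / K =
     sum_n (fun y => if (y <? k)%nat then below p k l y * (Pk p k y (fun _ => 1) - Pk p k y (fun w => INR w * INR w) / K) else 0) k).
  { rewrite !Fstep. unfold Rdiv. rewrite <- sn_comb. apply sn_ext. intros y _. destruct (y <? k)%nat; ring. }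
  assert (E2 : F l (fun _ => 1) - F l INR * c' - F l (fun w => INR w * INR w) * / K =
     sum_n (fun y => if (y <? k)%nat then below p k l y * (1 - INR y * (1 - A) - (INR y * S2 + INR y * INR y) / K) else 0) k).
  { unfold F. rewrite <- !sn_comb. apply sn_ext. intros y _. unfold c'. destruct (y <? k)%nat; unfold Rdiv; ring. }
  assert (sum_n (fun y => if (y <? k)%nat then below p k l y * (1 - INR y * (1 - A) - (INR y * S2 + INR y * INR y) / K) else 0) k
     <= sum_n (fun y => if (y <? k)%nat then below p k l y * (Pk p k y (fun _ => 1) - Pk p k y (fun w => INR w * INR w) / K) else 0) k).
  { apply sn_le. intros y _. destruct (y <? k)%nat; [|lra]. apply Rmult_le_compat_l. apply below_nn.
    apply Rge_le. apply (key p p0 pm pmean k hk y). }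
  unfold Rdiv in *. lra.
Qed.

Lemma F0_gen g : F 0 g = g 1%nat.
Proof.
  unfold F. rewrite (sn_zero_ext _ 1 k); [|lia|].
  - rewrite snS, sn0. simpl. destruct (Nat.ltb_spec 1 k); [|lia]. destruct (0 <? k)%nat; ring.
  - intros i Hi. simpl. destruct i; [lia|]. destruct i; [lia|]. destruct (Nat.ltb_spec (S (S i)) k); simpl; ring.
Qed.

Lemma c'_nn : 0 <= c'.
Proof.
  unfold c'. assert (A <= 1) by (apply (A1 p pm k hk)). assert (0 <= S2).
  { apply sn_nonneg. intros. apply Rmult_le_pos. apply Rmult_le_pos; apply pos_INR. apply qt0; auto. }
  assert (0 < K) by (apply (Kpos k hk)). assert (0 <= S2 / K) by (unfold Rdiv; apply Rmult_le_pos; auto; left; apply Rinv_0_lt_compat; auto).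
  lra.
Qed.

Lemma pot m : 1 - F m (fun _ => 1) + F m (fun w => INR w * INR w) / K <= 1 / K + INR m * c'
   /\ F m INR <= 1.
Proof.
  induction m.
  - rewrite !F0_gen. simpl. split; [|lra]. unfold Rdiv. lra.
  - destruct IHm as [I1 I2]. split.
    + eapply Rle_trans. apply pot_step. rewrite S_INR. assert (0 <= c') by apply c'_nn. nra.
    + eapply Rle_trans. apply mean_step. auto.
Qed.

Lemma GW_bound m : GW_max_ge p m k <= 1 / K + INR m * c'.
Proof.
  destruct (pot m) as [I1 _].
  assert (0 <= F m (fun w => INR w * INR w) / K).
  { unfold Rdiv. apply Rmult_le_pos. apply F_nn. intros; apply Rmult_le_pos; apply pos_INR.
    left; apply Rinv_0_lt_compat, (Kpos k hk). }
  unfold GW_max_ge. replace (sum_n (fun z => if (z <? k)%nat then below p k m z else 0) k) with (F m (fun _ => 1)).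
  lra. unfold F. apply sn_ext. intros. destruct (_ <? _)%nat; ring.
Qed.
End Main.

Lemma Bterm_nn p : (forall j, 0 <= p j) -> forall j, 0 <= INR j * (INR j - 1) * p j.
Proof.
  intros H j. apply Rmult_le_pos; auto. destruct j. simpl; lra.
  rewrite S_INR. assert (0 <= INR j) by apply pos_INR. nra.
Qed.

Lemma B_mono p : (forall j, 0 <= p j) -> forall n m, (n <= m)%nat -> B p n <= B p m.
Proof. intros H n m Hnm. unfold B. apply sn_mono; auto. apply Bterm_nn; auto. Qed.

Lemma B_k2 p k : (forall j, 0 <= p j) -> 0 < B p k -> (2 <= k)%nat.
Proof.
  intros H HB. destruct k. unfold B in HB. rewrite sn0 in HB. simpl in HB. lra.
  destruct k. unfold B in HB. rewrite snS, sn0 in HB. simpl in HB. lra. lia.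
Qed.

Lemma bstar p : (forall j, 0 <= p j) -> exists b, 0 < b /\ forall k, 0 < B p k -> b <= B p k.
Proof.
  intros H.
  destruct (classic (exists n, 0 < B p n)) as [[n Hn]|Hno].
  2:{ exists 1. split; [lra|]. intros k Hk. exfalso; apply Hno; eauto. }
  induction n as [n IH] using (well_founded_induction lt_wf).
  destruct (classic (exists n', (n' < n)%nat /\ 0 < B p n')) as [[n' [H1 H2]]|Hn'].
  - apply (IH n' H1 H2).
  - exists (B p n). split; auto. intros k Hk. destruct (le_lt_dec n k).
    + apply B_mono; auto.
    + exfalso. apply Hn'. eauto.
Qed.

Lemma half_facts k j : (j <= k / 2)%nat -> INR j <= INR k / 2.
Proof.
  intros Hj. assert (2 * j <= k)%nat.
  { pose proof (Nat.div_mod_eq k 2). pose proof (Nat.mod_upper_bound k 2). lia. }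
  apply le_INR in H. rewrite mult_INR in H. simpl in H. lra.
Qed.
Lemma half_facts2 k j : (k / 2 < j)%nat -> INR k / 2 < INR j.
Proof.
  intros Hj. assert (k < 2 * j)%nat.
  { pose proof (Nat.div_mod_eq k 2). pose proof (Nat.mod_upper_bound k 2). lia. }
  apply lt_INR in H. rewrite mult_INR in H. simpl in H. lra.
Qed.

Lemma tail_eq (p : nat -> R) k : is_series p 1 -> @eq R (tail p (INR k / 2)) (1 - @sum_n R_AbelianMonoid p (k / 2)).
Proof.
  intros Hs. set (h := (k / 2)%nat). unfold tail.
  set (g := fun j => if Rlt_dec (INR k / 2) (INR j) then p j else 0).
  apply is_series_unique.
  assert (H1 : is_series (fun j => p (S h + j)%nat) (1 - sum_n p h)).
  { apply is_series_incr_n. lia. simpl pred.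
    unfold plus; simpl.
    match goal with |- is_series p (?a - ?s1 + ?s2) =>
      assert (Es : s1 = s2) by reflexivity; rewrite Es; replace (a - s2 + s2) with 1 by ring end.
    exact Hs. }
  assert (H2 : is_series (fun j => g (S h + j)%nat) (1 - sum_n p h)).
  { apply (is_series_ext (fun j => p (S h + j)%nat)); auto. intros j. unfold g.
    destruct (Rlt_dec (INR k / 2) (INR (S h + j))); auto. exfalso. apply n. apply half_facts2. unfold h. lia. }
  apply (is_series_decr_n g (S h)); [lia|]. simpl pred.
  assert (Z : @eq R (@sum_n R_AbelianMonoid g h) 0).
  { rewrite <- (sn_zero h). apply sn_ext. intros i Hi. unfold g. destruct (Rlt_dec (INR k / 2) (INR i)); auto.
    exfalso. assert (INR i <= INR k / 2) by (apply half_facts; unfold h in Hi; lia). lra. }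
  unfold plus, opp; simpl.
  match goal with |- is_series _ (?a - ?s1 + - ?s2) =>
    assert (E1 : s2 = 0) by (rewrite <- Z; reflexivity);
    rewrite E1; replace (a - s1 + - 0) with (a - s1) by ring end.
  exact H2.
Qed.

Lemma S2_le p k : (forall j, 0 <= p j) -> (forall N, sum_n (fun j => INR j * p j) N <= 1) ->
  sum_n (fun a => INR a * INR a * qt p k a) (k / 2) <= B p k + 1.
Proof.
  intros H0 Hm.
  rewrite (sn_ext _ (fun a => INR a * (INR a - 1) * p a + INR a * p a)).
  2:{ intros i Hi. unfold qt. destruct (Nat.leb_spec i (k/2)); [ring|lia]. }
  rewrite sn_plus. specialize (Hm (k/2)%nat).
  assert (sum_n (fun a => INR a * (INR a - 1) * p a) (k / 2) <= B p k).
  { unfold B. apply sn_mono. apply Nat.div_le_upper_bound; lia. apply Bterm_nn; auto. }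
  lra.
Qed.

Theorem lemma8 (p : nat -> R) (Hp : offspring_law p) (Hc : critical_nondeg p) :
  exists c1 c2 : R,
    forall k m : nat, (1 <= k)%nat -> (1 <= m)%nat ->
      0 < B p k -> c2 < INR k / (INR m * B p k) ->
      GW_max_ge p m k
        <= c1 * (INR m * B p k / (INR k ^ 2)) + INR m * tail p (INR k / 2).
Proof.
  destruct Hp as [p0 Hs]. destruct Hc as [Hmean _].
  assert (pm := ser_partial_le p 1 Hs p0).
  assert (pmean := ser_partial_le _ 1 Hmean (fun n => Rmult_le_pos _ _ (pos_INR n) (p0 n))).
  destruct (bstar p p0) as [b [hb Hb]].
  exists (1 + 2 / b), 0. intros k m hk1 hm HB _.
  assert (hk := B_k2 p k p0 HB).
  assert (G := GW_bound p p0 pm pmean k hk m).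
  rewrite (A_eq p k hk) in G. rewrite <- (tail_eq p k Hs) in G.
  assert (HS := S2_le p k p0 pmean).
  set (S2 := sum_n (fun a => INR a * INR a * qt p k a) (k / 2)) in *.
  set (T := tail p (INR k / 2)) in *.
  set (Bk := B p k) in *.
  assert (Kp := Kpos k hk).
  replace (INR k ^ 2) with (INR k * INR k) by ring.
  set (K := INR k * INR k) in *.
  assert (Hm : 1 <= INR m) by (apply (le_INR 1); auto).
  assert (Hbk : b <= Bk) by (apply Hb; auto).
  set (x := / K).
  assert (xp : 0 < x) by (apply Rinv_0_lt_compat; auto).
  assert (E1 : 1 / K = x) by (unfold x, Rdiv; ring).
  assert (E2 : S2 / K = S2 * x) by (unfold x, Rdiv; ring).
  assert (E3 : INR m * Bk / K = INR m * Bk * x) by (unfold x, Rdiv; ring).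
  rewrite E1, E2 in G. rewrite E3.
  assert (R1 : 1 <= Bk / b). { apply (Rmult_le_reg_r b); auto. unfold Rdiv. rewrite Rmult_assoc, Rinv_l; lra. }
  assert (E4 : (1 + 2 / b) * (INR m * Bk * x) = INR m * Bk * x + 2 * INR m * (Bk / b) * x) by (unfold Rdiv; ring).
  rewrite E4.
  assert (H1 : INR m * (S2 * x) <= INR m * ((Bk + 1) * x)).
  { apply Rmult_le_compat_l; [lra|]. apply Rmult_le_compat_r; lra. }
  assert (H2 : x <= INR m * x) by nra.
  assert (H3 : INR m * x <= INR m * (Bk / b) * x).
  { apply Rmult_le_compat_r; [lra|]. nra. }
  nra.
Qed.
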